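(* Let $X$ be a random variable taking values in a set $\mathcal{X}$, $Y \in [0,1]$ a target outcome, and $H$ a random variable (expert feedback) taking values in an arbitrary domain $\mathcal{H}$, all jointly distributed. Let $\mathcal{F}$ be a class of functions $\mathcal{X} \to [0,1]$, $\alpha \ge 0$, and let $S \subseteq \mathcal{X}$ be $\alpha$-indistinguishable with respect to $\mathcal{F}$ and $Y$. Let $g : \mathcal{H} \to [0,1]$ satisfy, for some $\eta \ge 0$ and all $\beta, \gamma \in \mathbb{R}$, $$\mathbb{E}_S[(Y - g(H))^2] \le \mathbb{E}_S[(Y - \gamma - \beta g(H))^2] + \eta.$$ Then for every $f \in \mathcal{F}$, $$\mathbb{E}_S[(Y - g(H))^2] + 4\,\mathrm{Cov}_S(Y, g(H))^2 \le \mathbb{E}_S[(Y - f(X))^2] + 2\alpha + \eta.$$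
   Context: For $S \subseteq \mathcal{X}$ with $\mathbb{P}(X \in S) > 0$, $\mathbb{E}_S$ and $\mathrm{Cov}_S$ denote expectation and covariance conditional on $\{X \in S\}$. A set $S \subseteq \mathcal{X}$ is $\alpha$-indistinguishable with respect to $\mathcal{F}$ and $Y$ if $|\mathrm{Cov}(f(X), Y \mid X \in S)| \le \alpha$ for all $f \in \mathcal{F}$. *)

(* Defs.v *)
From HB Require Import structures.
From mathcomp Require Import all_boot all_order all_algebra.
From mathcomp Require Import all_classical all_reals all_analysis.
Set Implicit Arguments. Unset Strict Implicit. Unset Printing Implicit Defensive.
Import Order.TTheory GRing.Theory Num.Theory.
Local Open Scope classical_set_scope.
Local Open Scope ring_scope.

Definition condE {d} {T : measurableType d} {R : realType}
  (P : probability T R) (A : set T) (Z : T -> R) : R :=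
  Rintegral P A Z / fine (P A).

Definition condCov {d} {T : measurableType d} {R : realType}
  (P : probability T R) (A : set T) (U V : T -> R) : R :=
  condE P A (fun w => U w * V w) - condE P A U * condE P A V.

Definition indistinguishable {d} {T : measurableType d} {R : realType}
  {Xs : Type} (P : probability T R) (X : T -> Xs) (Y : T -> R)
  (F : set (Xs -> R)) (S : set Xs) (alpha : R) : Prop :=
  forall f, F f -> `| condCov P (X @^-1` S) (fun w => f (X w)) Y | <= alpha.

(* Main.v *)
Require Import Defs.
From HB Require Import structures.
From mathcomp Require Import all_boot all_order all_algebra.
From mathcomp Require Import all_classical all_reals all_analysis.
From mathcomp Require Import ring lra measurable_realfun.
Import Order.TTheory GRing.Theory Num.Theory.
Local Open Scope classical_set_scope.
Local Open Scope ring_scope.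

Definition Gd {d} {T : measurableType d} {R : realType} (U : T -> R) : Prop :=
  measurable_fun setT U /\ exists M : R, forall w, `|U w| <= M.

Lemma Gd_add {d} {T : measurableType d} {R : realType} (U V : T -> R) :
  Gd U -> Gd V -> Gd (fun w => U w + V w).
Proof.
move=> [mU [M hM]] [mV [N hN]]; split; first exact: measurable_funD.
exists (M + N) => w; apply: le_trans (ler_normD _ _) _; exact: lerD.
Qed.

Lemma Gd_mul {d} {T : measurableType d} {R : realType} (U V : T -> R) :
  Gd U -> Gd V -> Gd (fun w => U w * V w).
Proof.
move=> [mU [M hM]] [mV [N hN]]; split; first exact: measurable_funM.
exists (M * N) => w; rewrite normrM; apply: ler_pM => //.
Qed.

Lemma Gd_cst {d} {T : measurableType d} {R : realType} (k : R) :
  Gd (fun _ : T => k).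
Proof. split; first exact: measurable_cst. by exists `|k|. Qed.

Lemma Gd_int {d} {T : measurableType d} {R : realType} (P : probability T R)
  (A : set T) (mA : measurable A) (U : T -> R) :
  Gd U -> P.-integrable A (EFin \o U).
Proof.
move=> [mU [M hM]]; apply: measurable_bounded_integrable => //.
- by apply: (le_lt_trans (probability_le1 P mA)); exact: ltry.
- exact: measurable_funS mU.
- rewrite /bounded_near; near=> M' => t At /=.
  apply: le_trans (hM t) _; near: M'; apply: nbhs_pinfty_ge; exact: num_real.
Unshelve. all: end_near.
Qed.

Section CE.
Context {d} {T : measurableType d} {R : realType} (P : probability T R)
  (A : set T) (mA : measurable A) (PA : (0 < P A)%E).

Lemma fPA_gt0 : 0 < fine (P A).
Proof.
apply: fine_gt0; rewrite PA /=.
by apply: (le_lt_trans (probability_le1 P mA)); exact: ltry.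
Qed.

Lemma condED (U V : T -> R) : Gd U -> Gd V ->
  condE P A (fun w => U w + V w) = condE P A U + condE P A V.
Proof.
by move=> hU hV; rewrite /condE RintegralD ?mulrDl //; exact: Gd_int.
Qed.

Lemma condEZ (k : R) (U : T -> R) : Gd U ->
  condE P A (fun w => k * U w) = k * condE P A U.
Proof.
by move=> hU; rewrite /condE RintegralZl ?mulrA //; exact: Gd_int.
Qed.

Lemma condEc (k : R) : condE P A (fun _ => k) = k.
Proof.
rewrite /condE Rintegral_cst // mulfK //; have := fPA_gt0; by rewrite lt0r => /andP[].
Qed.

Lemma condE_le (U V : T -> R) : Gd U -> Gd V -> (forall w, U w <= V w) ->
  condE P A U <= condE P A V.
Proof.
move=> hU hV hUV; rewrite /condE ler_wpM2r //.
  by rewrite invr_ge0 ltW // fPA_gt0.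
by apply: le_Rintegral => //; exact: Gd_int.
Qed.
End CE.

Ltac gd := repeat first [ apply: Gd_add | apply: Gd_mul | apply: Gd_cst | assumption ].

Theorem corollary1 (R : realType)
  (d : measure_display) (T : measurableType d) (P : probability T R)
  (dX : measure_display) (Xs : measurableType dX)
  (dH : measure_display) (Hs : measurableType dH)
  (X : T -> Xs) (Y : T -> R) (H : T -> Hs)
  (mX : measurable_fun setT X) (mY : measurable_fun setT Y)
  (mH : measurable_fun setT H)
  (Y01 : forall w, 0 <= Y w <= 1)
  (F : set (Xs -> R))
  (mF : forall f, F f -> measurable_fun setT f)
  (F01 : forall f, F f -> forall x, 0 <= f x <= 1)
  (alpha : R) (halpha : 0 <= alpha)
  (S : set Xs) (mS : measurable S) (PS : (0 < P (X @^-1` S))%E)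
  (hind : indistinguishable P X Y F S alpha)
  (g : Hs -> R) (mg : measurable_fun setT g) (g01 : forall h, 0 <= g h <= 1)
  (eta : R) (heta : 0 <= eta)
  (hg : forall beta gamma : R,
     condE P (X @^-1` S) (fun w => (Y w - g (H w)) ^+ 2)
     <= condE P (X @^-1` S) (fun w => (Y w - gamma - beta * g (H w)) ^+ 2) + eta) :
  forall f, F f ->
    condE P (X @^-1` S) (fun w => (Y w - g (H w)) ^+ 2)
    + 4 * (condCov P (X @^-1` S) Y (fun w => g (H w))) ^+ 2
    <= condE P (X @^-1` S) (fun w => (Y w - f (X w)) ^+ 2) + 2 * alpha + eta.
Proof.
move=> f Ff.
have mA : measurable (X @^-1` S) by rewrite -[X @^-1` S]setTI; exact: mX.
set A := X @^-1` S in mA PS hg hind *.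
have gY : Gd Y.
  split => //; exists 1 => w; have := Y01 w; case/andP => h0 h1.
  by rewrite ger0_norm.
have gG : Gd (fun w => g (H w)).
  split; first exact: measurableT_comp.
  exists 1 => w; have := g01 (H w); case/andP => h0 h1; by rewrite ger0_norm.
have gF : Gd (fun w => f (X w)).
  split; first by apply: measurableT_comp => //; exact: mF.
  exists 1 => w; have := F01 f Ff (X w); case/andP => h0 h1; by rewrite ger0_norm.
set G := fun w => g (H w).
set Fx := fun w => f (X w).
have gG' : Gd G by [].
have gF' : Gd Fx by [].
set a := condE P A Y.
set b := condE P A G.
set c := condE P A Fx.
set yy := condE P A (fun w => Y w * Y w).
set gg := condE P A (fun w => G w * G w).
set ff := condE P A (fun w => Fx w * Fx w).
set yg := condE P A (fun w => Y w * G w).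
set fy := condE P A (fun w => Fx w * Y w).
have E1 : condE P A (fun w => (Y w - G w) ^+ 2) = yy + (-2) * yg + gg.
  rewrite (_ : (fun w => _) = (fun w => Y w * Y w + ((-2) * (Y w * G w) + G w * G w))); last first.
    by apply: boolp.funext => w; ring.
  rewrite !(condED _ _ mA, condEZ _ _ mA); try by gd.
  by rewrite addrA.
have E3 : condE P A (fun w => (Y w - Fx w) ^+ 2) = yy + (-2) * fy + ff.
  rewrite (_ : (fun w => _) = (fun w => Y w * Y w + ((-2) * (Fx w * Y w) + Fx w * Fx w))); last first.
    by apply: boolp.funext => w; ring.
  rewrite !(condED _ _ mA, condEZ _ _ mA); try by gd.
  by rewrite addrA.
have E2 : forall beta gamma, condE P A (fun w => (Y w - gamma - beta * G w) ^+ 2)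
   = yy + (-2 * gamma) * a + gamma ^+ 2 + (-2 * beta) * yg + (2 * gamma * beta) * b + beta ^+ 2 * gg.
  move=> beta gamma.
  rewrite (_ : (fun w => _) = (fun w => Y w * Y w + ((-2 * gamma) * Y w + (gamma ^+ 2 + ((-2 * beta) * (Y w * G w) + ((2 * gamma * beta) * G w + beta ^+ 2 * (G w * G w))))))); last first.
    by apply: boolp.funext => w; ring.
  rewrite !(condED _ _ mA, condEZ _ _ mA, condEc _ _ mA PS); try by gd.
  by rewrite !addrA.
have h2 : gg <= b.
  apply: condE_le => //; try by gd.
  move=> w; rewrite /G; have := g01 (H w); case/andP => h0 h1; nra.
have h3 : 0 <= ff + (-2 * c) * c + c ^+ 2.
  have := @condE_le _ _ _ P A mA PS (fun _ => 0) (fun w => Fx w * Fx w + ((-2 * c) * Fx w + c ^+ 2)).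
  rewrite condEc // !(condED _ _ mA, condEZ _ _ mA, condEc _ _ mA PS); try by gd.
  rewrite addrA; apply; try by gd.
  move=> w; have hh := sqr_ge0 (Fx w - c); nra.
have h4 : `| fy - c * a | <= alpha by exact: hind.
have hC : condCov P A Y G = yg - a * b by [].
rewrite hC E1 E3.
set C := yg - a * b.
have h1 := hg (4 * C) (a - 4 * C * b).
rewrite E1 E2 in h1.
have h5 : fy - c * a <= alpha by apply: le_trans (ler_norm _) h4.
have h6 : 0 <= (4 * C) ^+ 2 * (b - gg) by apply: mulr_ge0; [exact: sqr_ge0 | lra].
have h7 : 0 <= (4 * C) ^+ 2 * (b - 1/2) ^+ 2 by apply: mulr_ge0; exact: sqr_ge0.
have h8 : 0 <= (c - a) ^+ 2 by exact: sqr_ge0.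
have hk1 : yy + - 2 * (a - 4 * C * b) * a + (a - 4 * C * b) ^+ 2 +
   - 2 * (4 * C) * yg + 2 * (a - 4 * C * b) * (4 * C) * b + (4 * C) ^+ 2 * gg + eta
   = yy - a ^+ 2 - 4 * C ^+ 2 + eta - (4 * C) ^+ 2 * (b - gg) - (4 * C) ^+ 2 * (b - 1/2) ^+ 2.
  by rewrite /C; field; lra.

have hk2 : (c - a) ^+ 2 = c ^+ 2 - 2 * (c * a) + a ^+ 2 by ring.
have hk3 : ff + - 2 * c * c + c ^+ 2 = ff - c ^+ 2 by ring.

lra.
Qed.
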